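(* Assume [H-3] and let $T_0$ and $\bar R^i$ be as in the resolvent structure lemma. For $0\le t<s\le t+T_0$ and $v\in[0,1]$, set $u(v)=s-v(s-t)$ and $\bar R_v=\mathbb M_{s-t}^{-1}R^{\cdot,1}_{s,u(v)}$, i.e. the $nd\times d$ matrix with blocks $\frac{v^{k-1}}{(k-1)!}\bar R^k_{s,u(v)}$, $k=1,\dots,n$. There exists $C>0$ (depending on [H-3], $T_0$) such that for all $s\in[t,t+T_0]$ and all $p\in\mathbb R^{nd}$, $$\int_0^1|\bar R_v^*\mathbb M_{s-t}p|^\alpha\,dv\ge C|\mathbb M_{s-t}p|^\alpha.$$
   Context: $d,n\ge1$, $\alpha\in(0,2)$. $A_t$ has $d\times d$ blocks $a^{i,j}_t$ with $a^{i,j}_t=0$ if $j<i-1$, measurable and bounded in time; [H-3]: $\underline\alpha|\xi|^2\le\langle a^{i,i-1}_t\xi,\xi\rangle\le\overline\alpha|\xi|^2$ for $\xi\in\mathbb R^d$, $i\in\{2,\dots,n\}$, and $\|a^{i,j}_t\|\le\overline\alpha$. Resolvent $\frac{d}{ds}R_{s,t}=A_sR_{s,t}$, $R_{t,t}=I$; $R^{\cdot,1}_{s,t}$ its first $d$ columns. Resolvent structure lemma: there is $T_0\in(0,1]$ such that for $0\le t\le s\le t+T_0$, $R^{\cdot,1}_{s,t}$ has blocks $\frac{(s-t)^{i-1}}{(i-1)!}\bar R^i_{s,t}$ with $\bar R^i_{s,t}\in\mathbb R^d\otimes\mathbb R^d$ continuous, non-degenerate and bounded uniformly. $\mathbb M_u=\mathrm{Diag}(I_d,uI_d,\dots,u^{n-1}I_d)$.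 *)

(* Defs.v *)
From HB Require Import structures.
From mathcomp Require Import all_boot all_order all_algebra.
From mathcomp Require Import all_classical all_reals all_analysis.
Set Implicit Arguments. Unset Strict Implicit. Unset Printing Implicit Defensive.
Import Order.TTheory GRing.Theory Num.Theory.
Import numFieldNormedType.Exports.
Local Open Scope classical_set_scope.
Local Open Scope ring_scope.

(* Conventions: the paper's n (number of blocks, n >= 1) is encoded as n.+1,
   so the state space R^{nd} is 'cV_(n.+1 * d).  Blocks are indexed 0-based:
   paper block i (1-based) is our block i-1.  The (a,b) entry of block (i,j)
   of a matrix of size n.+1*d is the entry (i*d+a, j*d+b) = (mxvec_index i a,
   mxvec_index j b). *)

Section Defs.
Variable R : realType.

Definition vnorm (m : nat) (p : 'cV[R]_m) : R := Num.sqrt (\sum_k (p k 0) ^+ 2).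

Definition blk (n d : nat) (A : 'M[R]_(n.+1 * d)) (i j : 'I_n.+1) : 'M[R]_d :=
  \matrix_(a, b) A (mxvec_index i a) (mxvec_index j b).

Definition cblk (n d : nat) (B : 'M[R]_(n.+1 * d, d)) (i : 'I_n.+1) : 'M[R]_d :=
  \matrix_(a, b) B (mxvec_index i a) b.

Lemma d_le_Snd (n d : nat) : (d <= n.+1 * d)%N.
Proof. by rewrite mulSn leq_addr. Qed.

Definition firstcols (n d : nat) (M : 'M[R]_(n.+1 * d)) : 'M[R]_(n.+1 * d, d) :=
  \matrix_(k, b) M k (widen_ord (d_le_Snd n d) b).

(* M_u = Diag(I_d, u I_d, ..., u^{n-1} I_d): entry k of the diagonal lies in
   block k %/ d (0-based), hence carries u ^+ (k %/ d). *)
Definition Mmat (n d : nat) (u : R) : 'M[R]_(n.+1 * d) :=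
  \matrix_(k, l) ((k == l)%:R * u ^+ (k %/ d)%N).

Definition Rbarv (n d : nat) (Res : R -> R -> 'M[R]_(n.+1 * d)) (t s v : R)
  : 'M[R]_(n.+1 * d, d) :=
  invmx (Mmat n d (s - t)) *m firstcols (Res s (s - v * (s - t))).

End Defs.

(* Main.v *)
Require Import Defs.
From HB Require Import structures.
From mathcomp Require Import all_boot all_order all_algebra.
From mathcomp Require Import all_classical all_reals all_analysis.
Import Order.TTheory GRing.Theory Num.Theory.
Import numFieldNormedType.Exports.
Local Open Scope classical_set_scope.
Local Open Scope ring_scope.
Set Implicit Arguments. Unset Strict Implicit. Unset Printing Implicit Defensive.
From mathcomp Require Import lra ring.

Section Vec.
Variable R : realType.

Definition dot (m : nat) (x y : 'cV[R]_m) : R := \sum_k x k 0 * y k 0.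

Lemma dot_ge0 m (x : 'cV[R]_m) : 0 <= dot x x.
Proof. by apply: sumr_ge0 => k _; rewrite -expr2 sqr_ge0. Qed.

Lemma vnorm_ge0 m (x : 'cV[R]_m) : 0 <= vnorm x.
Proof. exact: sqrtr_ge0. Qed.

Lemma vnorm_sq m (x : 'cV[R]_m) : vnorm x ^+ 2 = dot x x.
Proof.
rewrite /vnorm sqr_sqrtr; last by apply: sumr_ge0 => k _; exact: sqr_ge0.
by apply: eq_bigr => k _; rewrite expr2.
Qed.

Lemma dot0_eq m (x y : 'cV[R]_m) : dot x x = 0 -> dot x y = 0.
Proof.
move=> /eqP; rewrite psumr_eq0; last by move=> k _; rewrite -expr2 sqr_ge0.
move=> /allP H; apply: big1 => k _.
have /implyP := H k (mem_index_enum _); rewrite -expr2 sqrf_eq0 => /(_ isT) /eqP ->.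
by rewrite mul0r.
Qed.

Lemma dotC m (x y : 'cV[R]_m) : dot x y = dot y x.
Proof. by apply: eq_bigr => k _; rewrite mulrC. Qed.

Lemma CS m (x y : 'cV[R]_m) : dot x y <= vnorm x * vnorm y.
Proof.
set A := vnorm x; set B := vnorm y.
have A0 : 0 <= A := vnorm_ge0 x. have B0 : 0 <= B := vnorm_ge0 y.
have [A00|Ap] := eqVneq A 0.
  rewrite A00 mul0r dot0_eq //.
  by rewrite -vnorm_sq -/A A00 expr2 mul0r.
have [B00|Bp] := eqVneq B 0.
  rewrite B00 mulr0 dotC dot0_eq //.
  by rewrite -vnorm_sq -/B B00 expr2 mul0r.
have H : 0 <= \sum_k (B * x k 0 - A * y k 0) ^+ 2 by apply: sumr_ge0 => k _; exact: sqr_ge0.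
have E : \sum_k (B * x k 0 - A * y k 0) ^+ 2 =
   B ^+ 2 * dot x x - 2 * (A * B) * dot x y + A ^+ 2 * dot y y.
  rewrite /dot !mulr_sumr -!sumrB -big_split /=; apply: eq_bigr => k _; ring.
move: H; rewrite E -!vnorm_sq -/A -/B => H.
have ABp : 0 < A * B by rewrite mulr_gt0 // lt0r ?Ap ?Bp.
have : (A * B) * dot x y <= (A * B) * (A * B) by nra.
by rewrite ler_pM2l.
Qed.

Lemma CSl m (x y : 'cV[R]_m) : - (vnorm x * vnorm y) <= dot x y.
Proof.
have := CS x (- y).
have -> : dot x (- y) = - dot x y by rewrite /dot -sumrN; apply: eq_bigr => k _; rewrite mxE mulrN.
have -> : vnorm (- y) = vnorm y by rewrite /vnorm; congr Num.sqrt; apply: eq_bigr => k _; rewrite mxE sqrrN.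
by rewrite lerNl.
Qed.

Lemma vnorm0_eq m (x : 'cV[R]_m) : vnorm x = 0 -> x = 0.
Proof.
move=> H; have : dot x x = 0 by rewrite -vnorm_sq H expr2 mul0r.
move=> /eqP; rewrite psumr_eq0; last by move=> k _; rewrite -expr2 sqr_ge0.
move=> /allP Hk; apply/matrixP => k l; rewrite (ord1 l) mxE.
have /implyP := Hk k (mem_index_enum _); rewrite -expr2 sqrf_eq0 => /(_ isT) /eqP ->.
by [].
Qed.

End Vec.

Lemma nth_allpairs_pair (T1 T2 : Type) (x1 : T1) (x2 : T2) (s : seq T1) (t : seq T2) i j :
  (i < size s)%N -> (j < size t)%N ->
  nth (x1, x2) [seq (a, b) | a <- s, b <- t] (i * size t + j) = (nth x1 s i, nth x2 t j).
Proof.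
elim: s i => [|a s IH] [|i] //= Hi Hj.
  by rewrite nth_cat size_map Hj (nth_map x2).
rewrite nth_cat size_map mulSn -addnA ltnNge leq_addr /= addKn.
exact: IH.
Qed.

Lemma mxvec_index_val (m n : nat) (i : 'I_m) (j : 'I_n) : (mxvec_index i j : nat) = (i * n + j)%N.
Proof.
rewrite /mxvec_index /=.
have E : enum {: 'I_m * 'I_n} = [seq (x1, x2) | x1 <- enum 'I_m, x2 <- enum 'I_n].
  by rewrite enumT unlock.
have H1 := nth_enum_rank (i, j) (i, j).
have Hs : size (enum {: 'I_m * 'I_n}) = (m * n)%N.
  by rewrite E size_allpairs !size_enum_ord.
have Hlt : (i * n + j < m * n)%N.
  apply: (leq_trans (n := i * n + n)); first by rewrite ltn_add2l.
  by rewrite addnC -mulSn leq_mul2r ltn_ord orbT.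
have H2 : nth (i, j) (enum {: 'I_m * 'I_n}) (i * n + j) = (i, j).
  rewrite E.
  have := @nth_allpairs_pair _ _ i j (enum 'I_m) (enum 'I_n) i j.
  rewrite !size_enum_ord => ->; rewrite ?ltn_ord //.
  by rewrite !nth_ord_enum.
have Hr : (enum_rank (i, j) < m * n)%N.
  have HH : forall k : nat, (k < #|{: 'I_m * 'I_n}|)%N -> (k < m * n)%N by rewrite mxvec_cast.
  exact: HH (ltn_ord _).
apply/eqP; rewrite -(nth_uniq (i, j) (s := enum {: 'I_m * 'I_n})) ?Hs ?enum_uniq //.
by rewrite H1 H2.
Qed.

Lemma mxvec_index_div (N d : nat) (i : 'I_N) (a : 'I_d) : ((mxvec_index i a : nat) %/ d)%N = i.
Proof.
rewrite mxvec_index_val divnMDl; last by case: d a => [[]|].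
by rewrite divn_small ?addn0.
Qed.

Section LA.
Variable R : realType.

Lemma sum_mxvec N d (F : 'I_(N * d) -> R) :
  \sum_k F k = \sum_(i < N) \sum_(a < d) F (mxvec_index i a).
Proof.
rewrite (reindex _ (curry_mxvec_bij _ _)) /= pair_bigA /=.
by apply: eq_bigr => [[i j]].
Qed.

Lemma Mmat_tr n d (h : R) : (Mmat n d h)^T = Mmat n d h.
Proof.
apply/matrixP => k l; rewrite !mxE eq_sym; case: eqVneq => [->|] //=; by rewrite !mul0r.
Qed.

Lemma Mmat_unit n d (h : R) : h != 0 -> Mmat n d h \in unitmx.
Proof.
move=> h0.
pose D : 'M[R]_(n.+1 * d) := \matrix_(k, l) ((k == l)%:R * h^-1 ^+ (k %/ d)%N).
suff : Mmat n d h *m D = 1%:M by case/mulmx1_unit.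
apply/matrixP => k l; rewrite !mxE (bigD1 k) //= big1 ?addr0.
  rewrite !mxE eqxx mul1r; case: eqVneq => [->|] /=; last by rewrite !mul0r mulr0.
  by rewrite mul1r -exprMn mulfV // expr1n.
by move=> j /negbTE; rewrite !mxE eq_sym => ->; rewrite !mul0r.
Qed.

Lemma Mmat_mul n d (h : R) (p : 'cV[R]_(n.+1 * d)) (i : 'I_n.+1) (a : 'I_d) :
  (Mmat n d h *m p) (mxvec_index i a) 0 = h ^+ i * p (mxvec_index i a) 0.
Proof.
rewrite !mxE (bigD1 (mxvec_index i a)) //= big1 ?addr0.
  by rewrite !mxE eqxx mul1r mxvec_index_div.
by move=> j /negbTE; rewrite !mxE eq_sym => ->; rewrite !mul0r.
Qed.

End LA.

Section Key.
Variable R : realType.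

Lemma key (c1 K : R) : 0 < c1 -> 0 < K -> forall N : nat,
  exists dl ep : R, [/\ 0 < dl, dl <= 1, 0 < ep &
   forall m : 'I_N.+1 -> R, (forall i, 0 <= m i) ->
   exists j : 'I_N.+1, exists a : R, [/\ 0 <= a, a + dl <= 1 &
     forall v, a <= v -> v <= a + dl ->
       ep * \sum_(i < N.+1) m i <= (c1 + K) * (v ^+ j * m j) - K * \sum_(i < N.+1) v ^+ i * m i]].
Proof.
move=> c1p Kp; elim=> [|N [dl' [ep' [dl'p dl'1 ep'p IH]]]].
  exists 1, c1; split => // m m0; exists ord0, 0; split => //.
  move=> v _ _; rewrite !big_ord1 /= expr0 !mul1r mulrDl addrK.
  lra.
pose g := dl' * ep' / (4 * K).
have gp : 0 < g by rewrite /g divr_gt0 ?mulr_gt0.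
pose d0 := c1 * g / (2 * K).
have d0p : 0 < d0 by rewrite /d0; apply: divr_gt0; apply: mulr_gt0.
have Kd0 : 2 * K * d0 = c1 * g by rewrite /d0 mulrCA divff ?mulr1 // mulf_neq0 // gt_eqF.
have Kg : 4 * K * g = dl' * ep' by rewrite /g mulrCA divff ?mulr1 // mulf_neq0 // gt_eqF.
pose e0 := c1 * g / (2 * (g + 1)).
have e0p : 0 < e0 by rewrite /e0; apply: divr_gt0; apply: mulr_gt0 => //; apply: addr_gt0.
have e0E : e0 * (2 * (g + 1)) = c1 * g by rewrite /e0 divfK // mulf_neq0 // gt_eqF // addr_gt0.
pose e1 := dl' * ep' / (4 * (1 + g)).
have e1p : 0 < e1 by rewrite /e1; apply: divr_gt0; apply: mulr_gt0 => //; apply: addr_gt0.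
have e1E : e1 * (4 * (1 + g)) = dl' * ep' by rewrite /e1 divfK // mulf_neq0 // gt_eqF // addr_gt0.
exists (Num.min d0 (dl' / 2)), (Num.min e0 e1).
have dlp : 0 < Num.min d0 (dl' / 2) by rewrite lt_min d0p divr_gt0.
have dl2 : Num.min d0 (dl' / 2) <= dl' / 2 by rewrite ge_min lexx orbT.
have dl0 : Num.min d0 (dl' / 2) <= d0 by rewrite ge_min lexx.
have ee0 : Num.min e0 e1 <= e0 by rewrite ge_min lexx.
have ee1 : Num.min e0 e1 <= e1 by rewrite ge_min lexx orbT.
split => //; first lra; first by rewrite lt_min e0p e1p.
move: (Num.min d0 (dl' / 2)) (Num.min e0 e1) dlp dl2 dl0 ee0 ee1 => dl ep dlp dl2 dl0 ee0 ee1.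
move=> m m0.
pose m' i := m (lift ord0 i).
have m'0 : forall i, 0 <= m' i by move=> i; exact: m0.
pose S := \sum_(i < N.+1) m' i.
have S0 : 0 <= S by apply: sumr_ge0 => i _.
have ES : \sum_(i < N.+2) m i = m ord0 + S by rewrite big_ord_recl.
have EP : forall v, \sum_(i < N.+2) v ^+ i * m i = m ord0 + v * \sum_(i < N.+1) v ^+ i * m' i.
  move=> v; rewrite big_ord_recl expr0 mul1r mulr_sumr; congr (_ + _).
  by apply: eq_bigr => i _; rewrite lift0 exprS mulrA.
have M0 := m0 ord0.
have [Hc|Hc] := leP (g * S) (m ord0).
- exists ord0, 0; split => //; first lra.
  move=> v v0; rewrite add0r => vd.
  rewrite ES EP expr0 mul1r.
  have X0 : 0 <= \sum_(i < N.+1) v ^+ i * m' i by apply: sumr_ge0 => i _; rewrite mulr_ge0 ?exprn_ge0.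
  have XS : \sum_(i < N.+1) v ^+ i * m' i <= S.
    apply: ler_sum => i _; rewrite ler_piMl ?m'0 // exprn_ile1 //; lra.
  have h1 : K * (v * \sum_(i < N.+1) v ^+ i * m' i) <= K * (d0 * S).
    rewrite ler_pM2l //; apply: ler_pM => //; lra.
  have h2 : ep * (m ord0 + S) <= e0 * (m ord0 + S) by apply: ler_wpM2r => //; lra.
  have h5 : c1 * (g * S) <= c1 * m ord0 by rewrite ler_pM2l.
  have h6 : e0 * (m ord0 + S) <= c1 * m ord0 / 2.
    rewrite -(@ler_pM2r _ (2 * (g + 1))); last by apply: mulr_gt0 => //; apply: addr_gt0.
    have -> : e0 * (m ord0 + S) * (2 * (g + 1)) = (e0 * (2 * (g + 1))) * (m ord0 + S) by ring.
    rewrite e0E.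
    have -> : c1 * m ord0 / 2 * (2 * (g + 1)) = c1 * m ord0 * (g + 1) * (2 / 2) by ring.
    rewrite divff ?mulr1 //; nra.
  have h7 : K * (d0 * S) = c1 * (g * S) / 2.
    apply: (@mulIf _ 2) => //; rewrite divfK //.
    have -> : K * (d0 * S) * 2 = (2 * K * d0) * S by ring.
    by rewrite Kd0 mulrA.
  nra.
- have [j' [a' [a'0 a'1 H']]] := IH m' m'0.
  exists (lift ord0 j'), (a' + dl' / 2); split; [lra|lra|].
  move=> v va vb.
  have := H' v ltac:(lra) ltac:(lra) => Hv.
  rewrite ES EP lift0 exprS.
  have vp : dl' / 2 <= v by lra.
  have : v * (ep' * S) <= v * ((c1 + K) * (v ^+ j' * m' j') - K * (\sum_(i < N.+1) v ^+ i * m' i)).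
    by rewrite ler_wpM2l //; lra.
  set Y := (c1 + K) * _ - _ => HY.
  have HYe : (c1 + K) * (v * v ^+ j' * m (lift ord0 j')) - K * (m ord0 + v * \sum_(i < N.+1) v ^+ i * m' i)
     = v * Y - K * m ord0 by rewrite /Y /m'; ring.
  rewrite HYe.
  have h3 : dl' / 2 * (ep' * S) <= v * (ep' * S) by rewrite ler_wpM2r ?mulr_ge0 //; lra.
  have h4 : ep * (m ord0 + S) <= e1 * (m ord0 + S) by rewrite ler_wpM2r //; lra.
  nra.
Qed.

End Key.

Section Integ.
Variable R : realType.
Local Notation mu := (@lebesgue_measure R).

Lemma int_mono (D : set R) (f g : R -> \bar R) :
  (forall x, D x -> 0 <= g x)%E -> (forall x, D x -> g x <= f x)%E ->
  (\int[mu]_(x in D) g x <= \int[mu]_(x in D) f x)%E.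
Proof.
move=> g0 gf.
have f0 : forall x, D x -> (0 <= f x)%E by move=> x Dx; exact: le_trans (g0 x Dx) (gf x Dx).
rewrite (ge0_integralE mu g0) (ge0_integralE mu f0) /=.
apply: ge_ereal_sup => _ [h hg <-]; apply: ereal_sup_ubound; exists h => // x.
apply: le_trans (hg x) _; rewrite !patchE; case: ifPn => // /set_mem Dx; exact: gf.
Qed.

Lemma rint_lower (f : R -> R) (a dl k M : R) : 0 <= a -> 0 < dl -> a + dl <= 1 -> 0 <= k ->
  (forall x, 0 <= x -> x <= 1 -> 0 <= f x /\ f x <= M) ->
  (forall x, a <= x -> x <= a + dl -> k <= f x) ->
  k * dl <= Rintegral mu `[0, 1] f.
Proof.
move=> a0 dl0 adl k0 fb fk.
have M0 : 0 <= M by have [] := fb 0 (lexx _) ler01; apply: le_trans.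
set X := (\int[mu]_(x in `[0%R, 1%R]) (f x)%:E)%E.
have hI : measurable [set` `[a, a + dl]] by [].
have hD : measurable [set` `[(0:R), (1:R)]] by [].
have low : ((k * dl)%:E <= X)%E.
  apply: (@le_trans _ _ (\int[mu]_(x in `[0%R, 1%R]) (k * \1_[set` `[a, a + dl]] x)%:E)%E).
    have E : (\int[mu]_(x in `[0%R, 1%R]) (k * \1_([set` `[a, a + dl]]) x)%:E =
        k%:E * \int[mu]_(x in `[0%R, 1%R]) (\1_([set` `[a, a + dl]]) x)%:E)%E.
      apply: (@integralZl_indic _ _ _ mu _ hD (fun _ => [set` `[a, a + dl]])) => //.
      by move=> kn; exfalso; lra.
    rewrite E.
    rewrite integral_indic //.
    have -> : [set` `[a, a + dl]] `&` [set` `[(0:R), (1:R)]] = [set` `[a, a + dl]].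
      apply/seteqP; split => x /=; first by case.
      move=> Hx; split => //; move: Hx; rewrite !in_itv /= => /andP [h1 h2].
      apply/andP; split; lra.
    have L := lebesgue_measure_itv `[a, a + dl]. rewrite /= lte_fin ltrDl dl0 -EFinD addrAC subrr add0r in L. rewrite [X in (_ * X)%E]L.
    by rewrite -EFinM.
  apply: int_mono => x Dx.
    by rewrite lee_fin mulr_ge0 // indicE; case: (x \in _).
  move: Dx; rewrite /= in_itv /= => /andP [x0 x1].
  rewrite lee_fin indicE; have [Hx|Hx] := boolP (x \in [set` `[a, a + dl]]).
    rewrite mulr1; move/set_mem: Hx; rewrite /= in_itv /= => /andP [h1 h2]; exact: fk.
  by rewrite mulr0; have [] := fb x x0 x1.
have up : (X <= M%:E)%E.
  apply: (@le_trans _ _ (\int[mu]_(x in `[0%R, 1%R]) (cst M%:E) x)%E).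
    apply: int_mono => x; rewrite /= in_itv /= => /andP [x0 x1]; have [h1 h2] := fb x x0 x1.
      by rewrite lee_fin.
    by rewrite lee_fin.
  have L := lebesgue_measure_itv `[(0:R), (1:R)]. rewrite /= lte_fin ltr01 -EFinD subr0 in L.
  by rewrite integral_cst // [X in (_ * X)%E]L mule1.
have X0 : (0 <= X)%E by apply: le_trans low; rewrite lee_fin mulr_ge0 // ltW.
have XE : X = (fine X)%:E.
  by rewrite fineK // ge0_fin_numE // (le_lt_trans up) // ltey.
by rewrite /Rintegral -/X -lee_fin -XE.
Qed.
End Integ.
Section PerV.
Variable R : realType.

Lemma inj_unit d (B : 'M[R]_d) (c : R) : 0 < c -> (forall z : 'cV_d, c * vnorm z <= vnorm (B *m z)) ->
  B \in unitmx.
Proof.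
move=> c0 HB; rewrite unitmxE unitfE -det_tr; apply/negP => /det0P [v v0 Hv].
have : B *m v^T = 0 by rewrite -[B]trmxK -trmx_mul Hv trmx0.
move=> Hz; have := HB v^T; rewrite Hz.
have -> : vnorm (0 : 'cV[R]_d) = 0.
  by rewrite /vnorm big1 ?sqrtr0 // => k _; rewrite mxE expr0n.
move=> H.
have : vnorm v^T = 0.
  apply/eqP; rewrite eq_le vnorm_ge0 andbT.
  by rewrite -(@ler_pM2l _ c) // mulr0.
move/vnorm0_eq => /(f_equal trmx); rewrite trmxK trmx0 => vE.
by move: v0; rewrite vE eqxx.
Qed.

Variables (d N : nat) (w : 'cV[R]_d) (Q : 'I_N -> 'cV[R]_d) (B : 'I_N -> 'M[R]_d)
  (coef : 'I_N -> R) (c K : R).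
Hypotheses (coef0 : forall i, 0 <= coef i) (c0 : 0 < c) (K0 : 0 < K)
  (HB : forall i z, c * vnorm z <= vnorm (B i *m z) /\ vnorm (B i *m z) <= K * vnorm z)
  (Hdot : forall z, dot w z = \sum_i coef i * dot (Q i) (B i *m z)).

Lemma perv_upper : (forall i, coef i <= 1) -> vnorm w <= K * \sum_i vnorm (Q i).
Proof.
move=> coef1.
have w0 := vnorm_ge0 w.
have [->|wp] := eqVneq (vnorm w) 0.
  apply: mulr_ge0; [exact: ltW | apply: sumr_ge0 => i _; exact: vnorm_ge0].
have H : vnorm w ^+ 2 <= vnorm w * (K * \sum_i vnorm (Q i)).
  rewrite vnorm_sq Hdot mulr_sumr mulr_sumr; apply: ler_sum => i _.
  have h1 := CS (Q i) (B i *m w).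
  have [_ h2] := HB i w.
  have hq := vnorm_ge0 (Q i).
  have hb := vnorm_ge0 (B i *m w).
  have ci := coef0 i; have ci1 := coef1 i.
  have hd : dot (Q i) (B i *m w) <= vnorm (Q i) * (K * vnorm w).
    apply: le_trans h1 _; exact: ler_wpM2l.
  have : coef i * dot (Q i) (B i *m w) <= coef i * (vnorm (Q i) * (K * vnorm w)) by exact: ler_wpM2l.
  move=> h3; apply: le_trans h3 _.
  have : 0 <= vnorm (Q i) * (K * vnorm w) by rewrite !mulr_ge0 // ltW.
  nra.
have wpos : 0 < vnorm w by rewrite lt0r wp.
by move: H; rewrite expr2 ler_pM2l.
Qed.

Lemma perv_lower (j : 'I_N) :
  coef j * c * vnorm (Q j) - K * \sum_(i | i != j) coef i * vnorm (Q i) <= vnorm w.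
Proof.
have w0 := vnorm_ge0 w.
have S0 : 0 <= \sum_(i | i != j) coef i * vnorm (Q i).
  by apply: sumr_ge0 => i _; rewrite mulr_ge0 // vnorm_ge0.
have [Q0|Qp] := eqVneq (vnorm (Q j)) 0.
  by rewrite Q0 mulr0 sub0r; apply: le_trans w0; rewrite oppr_le0; apply: mulr_ge0 => //; exact: ltW.
have Bu : B j \in unitmx by apply: (inj_unit c0) => z; have [] := HB j z.
have [z Bz] : exists z, B j *m z = Q j by exists (invmx (B j) *m Q j); rewrite mulKVmx.
have z0 := vnorm_ge0 z.
have zp : vnorm z != 0.
  apply/negP => /eqP /vnorm0_eq zE; move: Qp; rewrite -Bz zE mulmx0.
  by rewrite /vnorm big1 ?sqrtr0 ?eqxx // => k _; rewrite mxE expr0n.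
have zpos : 0 < vnorm z by rewrite lt0r zp.
have cz : c * vnorm z <= vnorm (Q j) by rewrite -Bz; have [] := HB j z.
have H1 := CS w z.
have H2 : coef j * vnorm (Q j) ^+ 2 - vnorm z * (K * \sum_(i | i != j) coef i * vnorm (Q i))
     <= dot w z.
  rewrite Hdot [X in _ <= X](bigD1 j) // Bz -vnorm_sq.
  rewrite lerD2l !mulr_sumr -sumrN; apply: ler_sum => i _.
  have h1 := CSl (Q i) (B i *m z).
  have [_ h2] := HB i z.
  have hq := vnorm_ge0 (Q i).
  have ci := coef0 i.
  have : - (vnorm (Q i) * (K * vnorm z)) <= dot (Q i) (B i *m z).
    apply: le_trans h1; rewrite lerN2; exact: ler_wpM2l.
  move=> h3; have := ler_wpM2l ci h3.
  move=> h4; apply: le_trans h4; rewrite mulrN lerN2.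
  have -> : vnorm z * (K * (coef i * vnorm (Q i))) = coef i * (vnorm (Q i) * (K * vnorm z)) by ring.
  by [].
set S := \sum_(i | i != j) _ in S0 H2 *.
have cj := coef0 j.
have hq := vnorm_ge0 (Q j).
have key : vnorm z * (coef j * c * vnorm (Q j) - K * S) <= vnorm z * vnorm w.
  rewrite [X in _ <= X]mulrC; apply: le_trans (le_trans H2 H1).
  have : coef j * vnorm (Q j) * (c * vnorm z) <= coef j * vnorm (Q j) * vnorm (Q j).
    by apply: ler_wpM2l => //; rewrite mulr_ge0.
  rewrite expr2; nra.
by move: key; rewrite ler_pM2l.
Qed.

End PerV.
Section Final.
Variable R : realType.

Lemma dotE m (x y : 'cV[R]_m) : dot x y = (x^T *m y) 0 0.
Proof. by rewrite /dot mxE; apply: eq_bigr => k _; rewrite mxE. Qed.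

Lemma dot_tr m l (A : 'M[R]_(m, l)) (x : 'cV[R]_m) (y : 'cV[R]_l) :
  dot (A^T *m x) y = dot x (A *m y).
Proof. by rewrite !dotE trmx_mul trmxK mulmxA. Qed.

Lemma sqrt_sum_le N (X : 'I_N -> R) : (forall i, 0 <= X i) ->
  Num.sqrt (\sum_i X i) <= \sum_i Num.sqrt (X i).
Proof.
move=> X0.
pose P (y1 y2 : R) := 0 <= y1 /\ Num.sqrt y1 <= y2.
suff : P (\sum_i X i) (\sum_i Num.sqrt (X i)) by case.
apply: (big_rec2 P); first by split; rewrite ?sqrtr0.
move=> i y1 y2 _ [h1 h2]; split; first by rewrite addr_ge0.
have s1 := sqrtr_ge0 (X i); have s2 := sqrtr_ge0 y1.
apply: (@le_trans _ _ (Num.sqrt (X i) + Num.sqrt y1)); last by rewrite lerD2l.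
rewrite -(@ler_pXn2r _ 2) //; last by rewrite nnegrE addr_ge0.
  rewrite sqr_sqrtr ?addr_ge0 // sqrrD !sqr_sqrtr //.
  by rewrite -addrA lerD2l lerDr mulrn_wge0 // mulr_ge0.
by rewrite nnegrE sqrtr_ge0.
Qed.

End Final.

Theorem lemma5p3 (R : realType) (n d : nat) (alpha alo ahi T0 : R)
  (A : R -> 'M[R]_(n.+1 * d)) (Res : R -> R -> 'M[R]_(n.+1 * d)) :
  (0 < d)%N ->
  0 < alpha -> alpha < 2 ->
  (* [H-3] *)
  0 < alo ->
  (forall k l, measurable_fun [set: R] (fun r => A r k l)) ->
  (forall r (i j : 'I_n.+1), (j.+1 < i)%N -> blk (A r) i j = 0) ->
  (forall r (i : 'I_n) (xi : 'cV[R]_d),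
     alo * vnorm xi ^+ 2 <= (xi^T *m blk (A r) (lift ord0 i) (widen_ord (leqnSn n) i) *m xi) 0 0
     /\ (xi^T *m blk (A r) (lift ord0 i) (widen_ord (leqnSn n) i) *m xi) 0 0 <= ahi * vnorm xi ^+ 2) ->
  (forall r (i j : 'I_n.+1) (xi : 'cV[R]_d), vnorm (blk (A r) i j *m xi) <= ahi * vnorm xi) ->
  (* resolvent: d/ds R_{s,t} = A_s R_{s,t}, R_{t,t} = I (integral form) *)
  (forall t k l, {within `[t, +oo[, continuous (fun s => Res s t k l)}) ->
  (forall t s, t <= s -> forall k l,
     Res s t k l = (k == l)%:R
       + \int[lebesgue_measure]_(r in `[t, s]) ((A r *m Res r t) k l)) ->
  (* resolvent structure lemma, with T0 and \bar R^i *)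
  0 < T0 -> T0 <= 1 ->
  (exists (Rb : 'I_n.+1 -> R -> R -> 'M[R]_d) (c K : R),
     0 < c /\ 0 < K /\
     (forall t s, 0 <= t -> t <= s -> s <= t + T0 -> forall i : 'I_n.+1,
        cblk (firstcols (Res s t)) i = ((s - t) ^+ i / (i`!)%:R) *: Rb i s t) /\
     (forall (i : 'I_n.+1) a b,
        {within [set st : R * R | 0 <= st.2 /\ st.2 <= st.1 /\ st.1 <= st.2 + T0],
          continuous (fun st : R * R => Rb i st.1 st.2 a b)}) /\
     (forall t s, 0 <= t -> t <= s -> s <= t + T0 -> forall (i : 'I_n.+1) (xi : 'cV[R]_d),
        c * vnorm xi <= vnorm (Rb i s t *m xi) /\ vnorm (Rb i s t *m xi) <= K * vnorm xi)) ->
  exists C : R, 0 < C /\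
    forall t s, 0 <= t -> t < s -> s <= t + T0 -> forall p : 'cV[R]_(n.+1 * d),
      \int[lebesgue_measure]_(v in `[0, 1])
          (vnorm ((Rbarv Res t s v)^T *m (Mmat n d (s - t) *m p))) `^ alpha
      >= C * (vnorm (Mmat n d (s - t) *m p)) `^ alpha.
Proof.
move=> d0 al0 al2 alo0 _ _ _ _ _ _ T00 T01 [Rb [c [K [c0 [K0 [Hstr [_ HRb]]]]]]].
pose c1 := c / (n`!)%:R.
have c1p : 0 < c1 by rewrite /c1 divr_gt0 // ltr0n fact_gt0.
have [dl [ep [dlp dl1 epp Hkey]]] := key c1p K0 n.
exists (dl * ep `^ alpha); split; first by rewrite mulr_gt0 // powR_gt0.
move=> t s t0 ts sT p.
set h := s - t.
have hp : 0 < h by rewrite /h subr_gt0.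
set q := Mmat n d h *m p.
pose Q (i : 'I_n.+1) : 'cV[R]_d := \col_a q (mxvec_index i a) 0.
pose m i := vnorm (Q i).
have m0 : forall i, 0 <= m i by move=> i; exact: vnorm_ge0.
have [j [a [a0 a1 Hv]]] := Hkey m m0.
have qS : vnorm q <= \sum_i m i.
  rewrite /vnorm (sum_mxvec (fun k => q k 0 ^+ 2)).
  apply: le_trans (sqrt_sum_le _) _.
    by move=> i; apply: sumr_ge0 => b _; exact: sqr_ge0.
  apply: ler_sum => i _; rewrite /m /vnorm le_eqVlt; apply/orP; left; apply/eqP; apply: congr1; apply: eq_bigr => b _; by rewrite /Q [in RHS]mxE.
have Hper : forall v, 0 <= v -> v <= 1 ->
   vnorm ((Rbarv Res t s v)^T *m q) <= K * \sum_i m i /\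
   (c1 + K) * (v ^+ j * m j) - K * \sum_(i < n.+1) v ^+ i * m i
      <= vnorm ((Rbarv Res t s v)^T *m q).
  move=> v v0 v1.
  set u := s - v * h.
  have vh : v * h <= h by rewrite ler_piMl // ltW.
  have vh0 : 0 <= v * h by rewrite mulr_ge0 // ltW.
  have u0 : 0 <= u by rewrite /u /h in vh *; lra.
  have us : u <= s by rewrite /u; lra.
  have sT' : s <= u + T0 by rewrite /u /h in vh *; lra.
  have su : s - u = v * h by rewrite /u opprB addrC subrK.
  pose coef (i : 'I_n.+1) := v ^+ i / (i`!)%:R.
  have coef0 : forall i, 0 <= coef i.
    by move=> k; rewrite /coef divr_ge0 ?exprn_ge0 ?ler0n.
  have HB : forall i z, c * vnorm z <= vnorm (Rb i s u *m z) /\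
                        vnorm (Rb i s u *m z) <= K * vnorm z.
    by move=> i z; exact: HRb u s u0 us sT' i z.
  have Hdot : forall z, dot ((Rbarv Res t s v)^T *m q) z =
                        \sum_i coef i * dot (Q i) (Rb i s u *m z).
    move=> z.
    have -> : (Rbarv Res t s v)^T *m q = (firstcols (Res s u))^T *m p.
      rewrite /Rbarv /q -/h -/u trmx_mul -mulmxA (mulmxA _ (Mmat n d h)).
      by rewrite trmx_inv Mmat_tr mulVmx ?mul1mx // Mmat_unit // gt_eqF.
    rewrite dot_tr /dot sum_mxvec; apply: eq_bigr => i _.
    rewrite mulr_sumr; apply: eq_bigr => b _.
    have Fz : (firstcols (Res s u) *m z) (mxvec_index i b) 0 =
              ((s - u) ^+ i / (i`!)%:R) * (Rb i s u *m z) b 0.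
      rewrite [LHS]mxE [X in _ * X]mxE mulr_sumr; apply: eq_bigr => e _.
      have := congr1 (fun M : 'M[R]_d => M b e) (Hstr u s u0 us sT' i).
      by rewrite !mxE => ->; rewrite mulrA.
    have -> : Q i b 0 = q (mxvec_index i b) 0 by rewrite /Q [LHS]mxE.
    rewrite Fz /q Mmat_mul su /coef exprMn; ring.
  split.
    apply: (perv_upper coef0 K0 HB Hdot) => i.
    rewrite /coef ler_pdivrMr ?ltr0n ?fact_gt0 // mul1r.
    apply: (@le_trans _ _ 1); first by rewrite exprn_ile1.
    by rewrite ler1n fact_gt0.
  have L := perv_lower coef0 c0 K0 HB Hdot j.
  apply: le_trans L.
  rewrite (bigD1 j) //=.
  set S1 := \sum_(i | i != j) v ^+ i * m i.
  set S2 := \sum_(i | i != j) coef i * m i.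
  have S21 : S2 <= S1.
    apply: ler_sum => i _; apply: ler_wpM2r => //.
    rewrite /coef ler_pdivrMr ?ltr0n ?fact_gt0 //.
    by rewrite ler_peMr ?exprn_ge0 // ler1n fact_gt0.
  have hinv : ((n`!)%:R : R)^-1 <= ((j`!)%:R)^-1.
    rewrite lef_pV2 ?posrE ?ltr0n ?fact_gt0 // ler_nat leq_fact //.
    by rewrite -ltnS ltn_ord.
  have hc : c1 * v ^+ j <= coef j * c.
    have e1 : c1 * v ^+ j = (c * v ^+ j) * ((n`!)%:R)^-1 by rewrite /c1; ring.
    have e2 : coef j * c = (c * v ^+ j) * ((j`!)%:R)^-1 by rewrite /coef; ring.
    rewrite e1 e2; apply: ler_wpM2l; [apply: mulr_ge0; [exact: ltW | exact: exprn_ge0] | exact: hinv].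
  have mj := m0 j.
  have h1 : c1 * v ^+ j * m j <= coef j * c * m j by apply: ler_wpM2r.
  have h2 : K * S2 <= K * S1 by rewrite ler_pM2l.
  have -> : (c1 + K) * (v ^+ j * m j) - K * (v ^+ j * m j + S1) = c1 * v ^+ j * m j - K * S1 by ring.
  change (vnorm (Q j)) with (m j); lra.
have Hlow : forall v, a <= v -> v <= a + dl ->
    ep * vnorm q <= vnorm ((Rbarv Res t s v)^T *m q).
  move=> v va vb.
  have [_ H2] := Hper v (le_trans a0 va) (le_trans vb a1).
  apply: le_trans H2; apply: le_trans (Hv v va vb).
  by rewrite ler_pM2l.
have -> : dl * ep `^ alpha * vnorm q `^ alpha = (ep `^ alpha * vnorm q `^ alpha) * dl by ring.
apply: (rint_lower (M := (K * \sum_i m i) `^ alpha) a0 dlp a1).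
- by rewrite mulr_ge0 ?powR_ge0.
- move=> x x0 x1; split; first exact: powR_ge0.
  have [H1 _] := Hper x x0 x1.
  apply: (ge0_ler_powR (ltW al0)) => //; rewrite ?nnegrE ?vnorm_ge0 //.
  by apply: le_trans H1; exact: vnorm_ge0.
- move=> x xa xb; rewrite -powRM ?(ltW epp) ?vnorm_ge0 //.
  apply: (ge0_ler_powR (ltW al0)); rewrite ?nnegrE ?vnorm_ge0 //.
    by rewrite mulr_ge0 ?vnorm_ge0 // ltW.
  exact: Hlow.
Qed.
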